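(* Let $\mathcal{A}$ be a unital algebra, $\tau:\mathcal{A}\to\mathbb{C}$ a unital linear functional and $\tau':\mathcal{A}\to\mathbb{C}$ a linear functional with $\tau'(1)=0$, and let $\mathcal{A}_1,\mathcal{A}_2$ be two unital subalgebras which are infinitesimally free with respect to $(\tau,\tau')$. Let $\mathcal{I}$ be an ideal of $\mathcal{A}$ with $\mathcal{I}\subset \ker(\tau)$. Then $(\mathcal{A}_1,\mathcal{I}\cap \mathcal{A}_1)$ and $(\mathcal{A}_2,\mathcal{I}\cap \mathcal{A}_2)$ are free of type $B$ in $(\mathcal{A},\tau,\mathcal{I},\tau'|_{\mathcal{I}})$.
   Context: Infinitesimal freeness w.r.t. $(\tau,\tau')$: whenever $a_j\in\mathcal{A}_{i_j}$ with consecutive indices different and $\tau(a_j)=0$ for all $j$, $\tau(a_1\cdots a_n)=0$ and $\tau'(a_1\cdots a_n)=\sum_{j=1}^n\tau(a_1\cdots a_{j-1}\tau'(a_j)a_{j+1}\cdots a_n)$. Freeness of type $B$ in $(\mathcal{A},\tau,\mathcal{I},\phi)$ with $\phi:\mathcal{I}\to\mathbb{C}$ linear, for pairs $(\mathcal{A}_h,V_h)$ with $V_h\subset\mathcal{I}$ a subspace stable under two-sided multiplication by $\mathcal{A}_h$: $\mathcal{A}_1,\mathcal{A}_2$ are free w.r.t. $\tau$, and whenever $a_n\in\mathcal{A}_{i_n},\dots,a_1\in\mathcal{A}_{i_1}$, $v\in V_h$, $b_1\in\mathcal{A}_{j_1},\dots,b_m\in\mathcal{A}_{j_m}$ with any two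 consecutive indices in $i_n,\dots,i_1,h,j_1,\dots,j_m$ different and all $a_r,b_s$ centered for $\tau$, $\phi(a_n\cdots a_1vb_1\cdots b_m)=\tau(a_nb_m)\cdots\tau(a_1b_1)\phi(v)$ if $n=m$ and $i_r=j_r$ for all $r$, and $=0$ otherwise. *)

(* Defs.v *)
From HB Require Import structures.
From mathcomp Require Import all_boot all_order all_algebra.
From mathcomp Require Import reals complex.
Set Implicit Arguments. Unset Strict Implicit. Unset Printing Implicit Defensive.
Import Order.TTheory GRing.Theory Num.Theory.
Local Open Scope ring_scope.

(* Indices {1,2} are encoded by bool (false = 1, true = 2).
   A finite word x_1 ... x_n is encoded by a function nat -> _ read on 0..n-1. *)

Section Defs.
Variables (K : fieldType) (A : algType K).

Definition two_sided_ideal (I : {pred A}) : Prop :=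
  zmod_closed I /\ (forall a x, x \in I -> a * x \in I /\ x * a \in I).

Definition alternating (n : nat) (ind : nat -> bool) : Prop :=
  forall r : nat, (r.+1 < n)%N -> ind r != ind r.+1.

Definition free_wrt (tau : A -> K) (B : bool -> {pred A}) : Prop :=
  forall (n : nat) (ind : nat -> bool) (a : nat -> A),
    (0 < n)%N -> alternating n ind ->
    (forall j, (j < n)%N -> a j \in B (ind j)) ->
    (forall j, (j < n)%N -> tau (a j) = 0) ->
    tau (\prod_(j < n) a j) = 0.

Definition inf_free (tau tau' : A -> K) (B : bool -> {pred A}) : Prop :=
  forall (n : nat) (ind : nat -> bool) (a : nat -> A),
    (0 < n)%N -> alternating n ind ->
    (forall j, (j < n)%N -> a j \in B (ind j)) ->
    (forall j, (j < n)%N -> tau (a j) = 0) ->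
    tau (\prod_(j < n) a j) = 0 /\
    tau' (\prod_(j < n) a j) =
      \sum_(j < n) tau ((\prod_(k < n | (k < j)%N) a k)
                        * (tau' (a j) *: 1)
                        * (\prod_(k < n | (j < k)%N) a k)).

(* freeness of type B of the pairs (B h, V h), h : bool, in (A, tau, I, phi);
   phi is only evaluated on elements of I. Words a_n ... a_1 are encoded as
   a (n-1), ..., a 0, i.e. a_r = a (r-1), with indices ia. *)
Definition free_typeB (tau : A -> K) (I : {pred A}) (phi : A -> K)
    (B V : bool -> {pred A}) : Prop :=
  (forall h, {subset V h <= I} /\ submod_closed (V h) /\
     (forall a v, a \in B h -> v \in V h -> a * v \in V h /\ v * a \in V h))
  /\ free_wrt tau B
  /\ forall (h : bool) (n m : nat) (ia : nat -> bool) (a : nat -> A)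
            (v : A) (jb : nat -> bool) (b : nat -> A),
       alternating n ia -> alternating m jb ->
       ((0 < n)%N -> ia 0%N != h) -> ((0 < m)%N -> jb 0%N != h) ->
       (forall r, (r < n)%N -> a r \in B (ia r)) ->
       (forall r, (r < m)%N -> b r \in B (jb r)) ->
       (forall r, (r < n)%N -> tau (a r) = 0) ->
       (forall r, (r < m)%N -> tau (b r) = 0) ->
       v \in V h ->
       phi ((\prod_(r < n) a (n - r.+1)%N) * v * (\prod_(r < m) b r)) =
       if (n == m) && [forall r : 'I_n, ia r == jb r]
       then (\prod_(r < n) tau (a r * b r)) * phi v
       else 0.

End Defs.

(* Main.v *)
Require Import Defs.
From HB Require Import structures.
From mathcomp Require Import all_boot all_order all_algebra.
From mathcomp Require Import reals complex.
From mathcomp Require Import zify.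
Set Implicit Arguments. Unset Strict Implicit. Unset Printing Implicit Defensive.
Import Order.TTheory GRing.Theory Num.Theory.
Local Open Scope ring_scope.
Local Open Scope complex_scope.

Definition cw {T : Type} n (a b : nat -> T) k :=
  if (k < n)%N then a (n - k.+1)%N else b (k - n)%N.

Lemma forall_recl n (P : nat -> bool) :
  [forall r : 'I_n.+1, P r] = P 0%N && [forall r : 'I_n, P r.+1].
Proof.
apply/forallP/andP => [H|[H0 H]].
  split; first exact: (H ord0).
  apply/forallP => r; exact: (H (lift ord0 r)).
case => [[|r] hr] //=.
exact: (forallP H (Ordinal (hr : (r < n)%N))).
Qed.

Section S.
Variables (R : realType) (A : algType R[i]) (tau : {scalar A}) (B : bool -> {pred A}).
Hypotheses (tau1 : tau 1 = 1) (Bc : forall h, subalg_closed (B h)) (fr : free_wrt tau B).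

Lemma prod_cw n m (a b : nat -> A) :
  \prod_(k < n + m) cw n a b k = (\prod_(r < n) a (n - r.+1)%N) * \prod_(r < m) b r.
Proof.
rewrite big_split_ord /=; congr (_ * _); apply: eq_bigr => i _; rewrite /cw /=.
  by rewrite ltn_ord.
by rewrite ltnNge leq_addr /= addKn.
Qed.

Lemma alt_cw n m ia jb : alternating n ia -> alternating m jb ->
  ((0 < n)%N -> (0 < m)%N -> ia 0%N != jb 0%N) -> alternating (n + m) (cw n ia jb).
Proof.
move=> ha hb hab r hr; rewrite /cw.
case: (ltnP r.+1 n) => h1.
  rewrite (ltnW h1).
  have -> : (n - r.+1 = (n - r.+2).+1)%N by lia.
  rewrite eq_sym; apply: ha; lia.
case: (ltnP r n) => h2.
  have e : n = r.+1 by lia.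
  rewrite e !subnn; apply: hab; lia.
rewrite subSn //; apply: hb; lia.
Qed.

Lemma alt0 n m ia jb (a b : nat -> A) : alternating n ia -> alternating m jb ->
  ((0 < n)%N -> (0 < m)%N -> ia 0%N != jb 0%N) -> (0 < n + m)%N ->
  (forall r, (r < n)%N -> a r \in B (ia r)) -> (forall r, (r < m)%N -> b r \in B (jb r)) ->
  (forall r, (r < n)%N -> tau (a r) = 0) -> (forall r, (r < m)%N -> tau (b r) = 0) ->
  tau ((\prod_(r < n) a (n - r.+1)%N) * \prod_(r < m) b r) = 0.
Proof.
move=> ha hb hab hnm Ha Hb Ta Tb.
rewrite -prod_cw. have := (@fr (n + m) (cw n ia jb) (cw n a b) hnm (alt_cw ha hb hab)). move=> H; apply: H => j hj; rewrite /cw;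
  case: ifP => hk; [apply: Ha|apply: Hb|apply: Ta|apply: Tb]; lia.
Qed.


Lemma alt_shift n (ia : nat -> bool) : alternating n.+1 ia -> alternating n (fun k => ia k.+1).
Proof. by move=> h r hr; apply: h. Qed.

Lemma free_word n : forall m ia jb (a b : nat -> A), alternating n ia -> alternating m jb ->
  (forall r, (r < n)%N -> a r \in B (ia r)) -> (forall r, (r < m)%N -> b r \in B (jb r)) ->
  (forall r, (r < n)%N -> tau (a r) = 0) -> (forall r, (r < m)%N -> tau (b r) = 0) ->
  tau ((\prod_(r < n) a (n - r.+1)%N) * \prod_(r < m) b r) =
  if (n == m) && [forall r : 'I_n, ia r == jb r] then \prod_(r < n) tau (a r * b r) else 0.
Proof.
elim: n => [|n IH] m ia jb a b ha hb Ha Hb Ta Tb.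
  rewrite big_ord0 mul1r; case: m hb Hb Tb => [|m] hb Hb Tb.
    rewrite big_ord0 tau1 /=.
    have -> : [forall r : 'I_0, ia r == jb r] by apply/forallP => -[].
    by rewrite big_ord0.
  have := @alt0 0 m.+1 ia jb a b ha hb; rewrite big_ord0 mul1r /=; apply => //;
    by move=> r; rewrite ltn0.
case: m hb Hb Tb => [|m] hb Hb Tb.
  have := @alt0 n.+1 0 ia jb a b ha hb; rewrite big_ord0 mulr1 /=; apply => //;
    by move=> r; rewrite ltn0.
case: (eqVneq (ia 0%N) (jb 0%N)) => hab; last first.
  rewrite (forall_recl n (fun k => ia k == jb k)) (negbTE hab) /= andbF.
  by apply: (@alt0 n.+1 m.+1 ia jb a b ha hb (fun _ _ => hab)). 
rewrite big_ord_recr big_ord_recl /= subnn.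

set P := \prod_(i < n) a (n.+1 - i.+1)%N.
have eP : P = \prod_(r < n) (fun k => a k.+1) (n - r.+1)%N.
  by apply: eq_bigr => i _; congr (a _); have := ltn_ord i; lia.
have eQ : \prod_(i < m) b (bump 0 i) = \prod_(r < m) (fun k => b k.+1) r.
  by apply: eq_bigr.
set Q := \prod_(i < m) b (bump 0 i).
set t := tau (a 0%N * b 0%N).
set c := a 0%N * b 0%N - t *: 1.
have e : P * a 0%N * (b 0%N * Q) = P * c * Q + t *: (P * Q).
  by rewrite /c mulrBr mulrBl mulr_algr -scalerAl subrK !mulrA.
rewrite e linearD linearZ /=.
have -> : tau (P * c * Q) = 0.
  pose a2 k := if k is 0 then c else a k.
  have -> : P * c = \prod_(r < n.+1) a2 (n.+1 - r.+1)%N.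
    rewrite big_ord_recr /= subnn /P; congr (_ * _); apply: eq_bigr => i _; rewrite /a2.
    by have := ltn_ord i; case e2: (n.+1 - i.+1)%N => [|k] //; lia.
  have cB : c \in B (ia 0%N).
    case: (Bc (ia 0%N)) => h1 hlin hmul.
    rewrite /c addrC -scaleNr; apply: hlin => //; apply: hmul; first exact: Ha.
    by rewrite hab; apply: Hb.
  have cT : tau c = 0.
    by rewrite /c linearB linearZ /= tau1 ?mulr1 ?scaler1 /t subrr.
  rewrite /Q eQ; apply: (@alt0 n.+1 m ia (fun k => jb k.+1) a2 (fun k => b k.+1) ha (alt_shift hb)).
  - by move=> _ hm; rewrite hab; exact: (hb 0%N hm).
  - by rewrite addSn.
  - by move=> [|r] hr //=; apply: Ha.
  - by move=> r hr; apply: Hb.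
  - by move=> [|r] hr //=; apply: Ta.
  - by move=> r hr; apply: Tb.
rewrite add0r eP /Q eQ (IH m (fun k => ia k.+1) (fun k => jb k.+1) (fun k => a k.+1) (fun k => b k.+1) (alt_shift ha) (alt_shift hb)); last first.
- by move=> r hr; apply: Tb.
- by move=> r hr; apply: Ta.
- by move=> r hr; apply: Hb.
- by move=> r hr; apply: Ha.
rewrite eqSS (forall_recl n (fun k => ia k == jb k)) hab eqxx /= big_ord_recl /=.
by case: ifP => _; [| rewrite mulr0].
Qed.

End S.

Lemma prodI (A : ringType) (I : {pred A}) (T : eqType) (s : seq T) (P : pred T) (F : T -> A) x :
  (forall a y, y \in I -> a * y \in I /\ y * a \in I) ->
  x \in s -> P x -> F x \in I -> \prod_(i <- s | P i) F i \in I.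
Proof.
move=> IM; elim: s => [//|y s IHs] /=; rewrite inE big_cons => /orP[/eqP <-|xs] Px Fx.
  by rewrite Px; case: (IM (\prod_(j <- s | P j) F j) (F x) Fx).
case: ifP => _; last exact: IHs.
by case: (IM (F y) _ (IHs xs Px Fx)).
Qed.

Theorem proposition2p8 (R : realType) (A : algType R[i])
    (tau tau' : {scalar A}) (B : bool -> {pred A}) (I : {pred A}) :
  tau 1 = 1 -> tau' 1 = 0 ->
  (forall h, subalg_closed (B h)) ->
  inf_free tau tau' B ->
  two_sided_ideal I ->
  (forall x, x \in I -> tau x = 0) ->
  free_typeB tau I tau' B (fun h => [predI I & B h]).
Proof.
move=> tau1 tau'1 Bc inf [[I0 IB] IM] Itau.
have fr : free_wrt tau B.
  by move=> n ind a hn hal hm hc; case: (inf n ind a hn hal hm hc).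
have IZ : forall k x, x \in I -> k *: x \in I.
  by move=> k x xI; rewrite -mulr_algl; case: (IM (k *: 1) x xI).
have ID : forall x y, x \in I -> y \in I -> x + y \in I.
  by move=> x y xI yI; have := IB _ _ xI (IB _ _ I0 yI); rewrite sub0r opprK.
split.
  move=> h; case: (Bc h) => h1 hlin hmul.
  split; first by move=> x /andP[].
  split; first split.
  - rewrite inE I0 /=; have := hlin (-1) 1 1 h1 h1; by rewrite scaleN1r addNr.
  - move=> k u v /andP[uI uB] /andP[vI vB]; rewrite inE; apply/andP; split.
      by apply: ID => //; apply: IZ.
    exact: hlin.
  - move=> a v aB /andP[vI vB]; case: (IM a v vI) => h2 h3.
    by split; rewrite inE; apply/andP; split => //; apply: hmul.
split; first exact: fr.
move=> h n m ia a v jb b ha hb hia hjb Ha Hb Ta Tb /andP[vI vB].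
pose a' k := if k is k'.+1 then a k' else v.
pose ia' k := if k is k'.+1 then ia k' else h.
have hal : alternating n.+1 ia'.
  move=> [|r] hr /=; last exact: ha.
  by rewrite eq_sym; apply: hia.
have -> : \prod_(r < n) a (n - r.+1)%N * v = \prod_(r < n.+1) a' (n.+1 - r.+1)%N.
  rewrite big_ord_recr /= subnn; congr (_ * _); apply: eq_bigr => i _; rewrite subSS /a'.
  have := ltn_ord i; case e2: (n - i)%N => [|k] /=; first lia.
  by move=> hi; congr (a _); lia.
rewrite -prod_cw.
set N := (n.+1 + m)%N.
set W := cw n.+1 a' b.
have memW : forall j, (j < N)%N -> W j \in B (cw n.+1 ia' jb j).
  move=> j hj; rewrite /W /cw; case: ifP => hk.
    by case e: (n.+1 - j.+1)%N => [|k] //=; apply: Ha; lia.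
  by apply: Hb; lia.
have cenW : forall j, (j < N)%N -> tau (W j) = 0.
  move=> j hj; rewrite /W /cw; case: ifP => hk.
    case e: (n.+1 - j.+1)%N => [|k] /=; first exact: Itau.
    by apply: Ta; lia.
  by apply: Tb; lia.
have hbd : (0 < n.+1)%N -> (0 < m)%N -> ia' 0%N != jb 0%N.
  by move=> _ hm; rewrite /= eq_sym; apply: hjb.
have [_ ->] := inf N (cw n.+1 ia' jb) W (ltn0Sn _) (alt_cw hal hb hbd) memW cenW.
have Wn : W n = v by rewrite /W /cw ltnSn subnn.
have nN : (n < N)%N by rewrite /N addSn ltnS leq_addr.
have WnI : W (Ordinal nN) \in I by rewrite /= Wn.
rewrite /N big_split_ord /= big_ord_recr /=.
rewrite big1 => [|i _]; last first.
  apply: Itau.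
  have YI : \prod_(k < n.+1 + m | (i < k)%N) W k \in I.
    apply: (prodI (x := Ordinal nN)) => //; first exact: mem_index_enum.
  by case: (IM (\prod_(k < n.+1 + m | (k < i)%N) W k * (tau' (W i))%:A) _ YI) => h1 _.
rewrite [X in _ + X]big1 => [|i _]; last first.
  apply: Itau.
  have XI : \prod_(k < n.+1 + m | (k < n.+1 + i)%N) W k \in I.
    apply: (prodI (x := Ordinal nN)) => //; first exact: mem_index_enum.
    by rewrite /= ltnS leq_addr.
  case: (IM (tau' (W (n.+1 + i)%N))%:A _ XI) => _ h1.
  by case: (IM (\prod_(k < n.+1 + m | (n.+1 + i < k)%N) W k) _ h1) => _ h2.
rewrite add0r addr0 Wn mulr_algr -scalerAl linearZ /=.
have eX : \prod_(k < n.+1 + m | (k < n)%N) W k = \prod_(r < n) a (n - r.+1)%N.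
  rewrite -(big_ord_widen (n.+1 + m) (fun k => W k)); last lia.
  apply: eq_bigr => i _; have hi : (i < n.+1)%N by have := ltn_ord i; lia.
  rewrite /W /cw hi subSS; have := ltn_ord i.
  case e: (n - i)%N => [|k] /=; first lia.
  by move=> _; congr (a _); lia.
have eY : \prod_(k < n.+1 + m | (n < k)%N) W k = \prod_(r < m) b r.
  rewrite big_split_ord /= big_pred0 => [|i]; last by rewrite /= ltnNge -ltnS ltn_ord.
  rewrite mul1r; apply: eq_big => [i|i _]; first by rewrite /= addSn ltnS leq_addr.
  by rewrite /W /cw /= ltnNge leq_addr /= addKn.
rewrite eX eY (free_word tau1 Bc fr ha hb Ha Hb Ta Tb).
by case: ifP => _; rewrite ?mulr0 // mulrC.
Qed.
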